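(* Assume the random gather-step setting below. For every Byzantine strategy $z=z(X)$ (the vectors $z^{(j)}$ being arbitrary functions of the delivering configuration $X$), $$\mathbb{E}_X\big[\Delta(\theta_1,\dots,\theta_h)\big]\le m\,\Delta(\lambda_1,\dots,\lambda_h)\quad\text{with } m=1-\frac{\rho}{4}<1 .$$
   Context: Median of reals: for $y_1,\dots,y_q\in\mathbb{R}$ with order statistics $y_{(1)}\le\dots\le y_{(q)}$, $\mathrm{median}=y_{((q+1)/2)}$ if $q$ is odd and $\frac12(y_{(q/2)}+y_{(q/2+1)})$ if $q$ is even; $\mathrm{Median}$ of vectors is applied coordinate-wise. Coordinate-wise diameters: $\Delta_i(v_1,\dots,v_h)=\max_{j,k}|v_j[i]-v_k[i]|$, $\Delta=\sum_{i=1}^d\Delta_i$. Random gather-step setting: integers $f\ge1$, $n$, $h=n-f$, and $q$ with $2f+2\le q\le\lfloor h/2\rfloor$; fixed vectors $\lambda_1,\dots,\lambda_h\in\mathbb{R}^d$ held by the correct servers $1,\dots,h$. Let $S_j=\{s\subset\{1,\dots,h\}\setminus\{j\}:|s|\in\{q-f-1,\dots,q-1\}\}$ and $S=\prod_{j=1}^hS_j$. A delivering configuration $X=(X_1,\dots,X_h)$ is a random element of $S$ with $P(X=s)\ge\rho$ for all $s\in S$, for some $\rho>0$. Given $X$, each correct server $j$ receives arbitrary vectors $z^{(j)}_1,\dots,z^{(j)}_{q-1-|X_j|}\in\mathbb{R}^d$ (possibly depending on $X$) and computes $\theta_j=\mathrm{Median}\big(\lambda_j,(\lambda_k)_{k\in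 X_j},z^{(j)}_1,\dots,z^{(j)}_{q-1-|X_j|}\big)$. *)

(* Defs.v *)
From HB Require Import structures.
From mathcomp Require Import all_boot all_order all_algebra.
Set Implicit Arguments. Unset Strict Implicit. Unset Printing Implicit Defensive.
Import Order.TTheory GRing.Theory Num.Theory.
Local Open Scope ring_scope.

(* Median of a finite list of reals (order statistics y_(1) <= ... <= y_(q),
   indices here 0-based). *)
Definition median (R : realFieldType) (ys : seq R) : R :=
  let s := sort <=%R ys in
  let q := size ys in
  if odd q then nth 0 s (q.-1./2)
  else (nth 0 s (q./2).-1 + nth 0 s q./2) / 2%:R.

Definition Median (R : realFieldType) (d : nat) (vs : seq 'rV[R]_d) : 'rV[R]_d :=
  \row_(i < d) median [seq (v : 'rV[R]_d) ord0 i | v <- vs].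

Definition Delta_i (R : realFieldType) (d h : nat) (v : 'I_h -> 'rV[R]_d)
  (i : 'I_d) : R :=
  \big[Num.max/0]_(j < h) \big[Num.max/0]_(k < h) `|v j ord0 i - v k ord0 i|.

Definition Delta (R : realFieldType) (d h : nat) (v : 'I_h -> 'rV[R]_d) : R :=
  \sum_(i < d) Delta_i v i.

(* Delivering configurations: X = (X_1,...,X_h), X_j a subset of servers. *)
Definition config (h : nat) := {ffun 'I_h -> {set 'I_h}}.

Definition inSj (f q h : nat) (j : 'I_h) (s : {set 'I_h}) : bool :=
  (j \notin s) && (q - f - 1 <= #|s| <= q - 1)%N.

Definition inS (f q h : nat) (X : config h) : bool :=
  [forall j, inSj f q j (X j)].

(* theta_j = Median(lambda_j, (lambda_k)_{k in X_j}, z^(j)_1..z^(j)_{q-1-|X_j|}),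
   where the Byzantine vectors are z X j t for t = 0 .. q-2-|X_j|. *)
Definition theta (R : realFieldType) (d h q : nat) (lambda : 'I_h -> 'rV[R]_d)
  (z : config h -> 'I_h -> nat -> 'rV[R]_d) (X : config h) (j : 'I_h) : 'rV[R]_d :=
  Median (lambda j :: [seq lambda k | k <- enum (X j)]
                    ++ [seq z X j t | t <- iota 0 (q - 1 - #|X j|)]).

(* Main.v *)
Require Import Defs.
From HB Require Import structures.
From mathcomp Require Import all_boot all_order all_algebra.
From mathcomp Require Import zify ring lra.
Import Order.TTheory GRing.Theory Num.Theory.
Local Open Scope ring_scope.

Set Implicit Arguments.


Section Med.
Variable R : realFieldType.

Lemma sorted_hi (b : R) (s : seq R) i :
  sorted <=%R s -> (i < size s - count (fun y : R => (b < y)%R) s)%N -> nth 0 s i <= b.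
Proof.
elim: s i => [|x s IH] i //= Hs.
have Hs' : sorted <=%R s by move: Hs; case: (s) => //= y t /andP[].
have Hall : all (fun y => x <= y) s by apply: order_path_min => //; apply: le_trans.
case: i => [|i] /=.
  case: (ltrP b x) => // Hbx.
  have -> : count (fun y : R => (b < y)%R) s = size s.
    apply/eqP; rewrite -all_count; apply/allP => y Hy.
    by apply: lt_le_trans Hbx _; move/allP: Hall; apply.
  by rewrite /= add1n subnn.
move=> Hi; apply: IH => //.
move: Hi; case: (b < x) => /=; lia.
Qed.

Lemma sorted_lo (a : R) (s : seq R) i :
  sorted <=%R s -> (count (fun y : R => (y < a)%R) s <= i)%N -> (i < size s)%N ->
  a <= nth 0 s i.
Proof.
elim: s i => [|x s IH] i //= Hs.
have Hs' : sorted <=%R s by move: Hs; case: (s) => //= y t /andP[].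
have Hall : all (fun y => x <= y) s by apply: order_path_min => //; apply: le_trans.
case: (ltrP x a) => Hxa /=.
  case: i => [|i] /=; first by rewrite add1n.
  by rewrite add1n ltnS => Hc Hi; apply: IH.
case: i => [|i] //= _ Hi.
apply: IH => //.
have -> : count (fun y : R => (y < a)%R) s = 0%N.
  apply/eqP; rewrite -leqn0 leqNgt -has_count; apply/hasPn => y Hy.
  by rewrite -leNgt; apply: le_trans Hxa _; move/allP: Hall; apply.
by [].
Qed.

Lemma median_in (ys : seq R) lo hi :
  (2 * count (fun y : R => (hi < y)%R) ys < size ys)%N ->
  (2 * count (fun y : R => (y < lo)%R) ys < size ys)%N ->
  lo <= median ys <= hi.
Proof.
move=> H1 H2.
rewrite /median.
set s := sort _ ys.
have Ss : sorted <=%R s by apply: sort_sorted; exact: le_total.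
have Sz : size s = size ys by rewrite size_sort.
have C1 : count (fun y : R => (hi < y)%R) s = count (fun y : R => (hi < y)%R) ys
  by apply/permP; rewrite perm_sort.
have C2 : count (fun y : R => (y < lo)%R) s = count (fun y : R => (y < lo)%R) ys
  by apply/permP; rewrite perm_sort.
set q := size ys in H1 H2 Sz *.
have hq : q./2 = (q %/ 2)%N by rewrite divn2.
have hq1 : (q.-1)./2 = (q.-1 %/ 2)%N by rewrite divn2.
have Hbnd : forall k, (q.-1./2 <= k <= q./2)%N -> lo <= nth 0 s k <= hi.
  move=> k /andP[k1 k2]; apply/andP; split.
    apply: sorted_lo => //; rewrite ?C2 ?Sz; lia.
  apply: sorted_hi => //; rewrite ?C1 ?Sz; lia.
case: ifP => Hodd.
  apply: Hbnd; rewrite hq hq1; lia.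
have Hk1 := Hbnd (q./2).-1.
have Hk2 := Hbnd (q./2).
have Oq : (q %% 2 = 0)%N by rewrite modn2 Hodd.
have /andP[a1 a2] : lo <= nth 0 s (q./2).-1 <= hi by apply: Hk1; rewrite hq hq1; lia.
have /andP[b1 b2] : lo <= nth 0 s (q./2) <= hi by apply: Hk2; rewrite hq hq1; lia.
apply/andP; split; lra.
Qed.
End Med.


Lemma theta_in (R : realFieldType) (d h q : nat) (lambda : 'I_h -> 'rV[R]_d)
  (z : config h -> 'I_h -> nat -> 'rV[R]_d) (X : config h) (j : 'I_h) (i : 'I_d)
  (lo hi : R) :
  (#|X j| <= q - 1)%N -> (0 < q)%N ->
  (forall k, k \in X j -> lo <= lambda k ord0 i <= hi) ->
  (2 * ((~~ (lo <= lambda j ord0 i <= hi)%R) + (q - 1 - #|X j|)) < q)%N ->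
  lo <= theta q lambda z X j ord0 i <= hi.
Proof.
move=> HX Hq Hin Hc.
rewrite /theta /Median mxE.
set L := (X in median X).
have Hs : size L = q.
  rewrite /L /= size_map size_cat !size_map size_iota -cardE.
  by rewrite addnC subnK // subn1 prednK.
have Hcount : forall p : pred R, (forall x, lo <= x <= hi -> ~~ p x) ->
   (count p L <= (~~ (lo <= lambda j ord0 i <= hi)%R) + (q - 1 - #|X j|))%N.
  move=> p Hp.
  rewrite /L /= map_cat -!map_comp count_cat !count_map.
  have -> : count (preim ((fun v : 'rV[R]_d => v ord0 i) \o lambda) p) (enum (X j)) = 0%N.
    rewrite (@eq_in_count _ _ pred0) ?count_pred0 // => k; rewrite mem_enum => Hk /=.
    by apply/negbTE/Hp/Hin.
  have H1 : (count (preim ((fun v : 'rV[R]_d => v ord0 i) \o z X j) p) (iota 0 (q - 1 - #|X j|))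
     <= q - 1 - #|X j|)%N.
    by rewrite -{2}(size_iota 0 (q - 1 - #|X j|)) count_size.
  have H2 : ((p (lambda j ord0 i) : nat) <= ~~ (lo <= lambda j ord0 i <= hi)%R)%N.
    case E: (lo <= lambda j ord0 i <= hi) => /=; last by case: (p _).
    by rewrite (negbTE (Hp _ E)).
  by apply: leq_add H2 _; rewrite add0n; exact: H1.
apply: median_in; rewrite Hs.
- have := Hcount (fun y : R => hi < y).
  have : forall x : R, lo <= x <= hi -> ~~ (hi < x) by move=> x /andP[_ ?]; rewrite -leNgt.
  move=> H /(_ H); lia.
- have := Hcount (fun y : R => y < lo).
  have : forall x : R, lo <= x <= hi -> ~~ (x < lo) by move=> x /andP[? _]; rewrite -leNgt.
  move=> H /(_ H); lia.
Qed.


Lemma Delta_i_ge0 (R : realFieldType) d h (v : 'I_h -> 'rV[R]_d) i : 0 <= Delta_i v i.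
Proof. exact: bigmax_ge_id. Qed.

Lemma Delta_i_diff (R : realFieldType) d h (v : 'I_h -> 'rV[R]_d) i j k :
  v j ord0 i - v k ord0 i <= Delta_i v i.
Proof.
apply: le_trans (ler_norm _) _.
apply: (bigmax_sup j) => //.
by apply: (bigmax_sup k).
Qed.

Lemma Delta_i_le (R : realFieldType) d h (v : 'I_h -> 'rV[R]_d) i (M : R) :
  0 <= M -> (forall j k, `|v j ord0 i - v k ord0 i| <= M) -> Delta_i v i <= M.
Proof.
move=> HM H; apply: bigmax_le => // j _; apply: bigmax_le => // k _; exact: H.
Qed.

Lemma Delta_i_range (R : realFieldType) d h (v : 'I_h -> 'rV[R]_d) i (lo M : R) :
  0 <= M -> (forall j, lo <= v j ord0 i <= lo + M) -> Delta_i v i <= M.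
Proof.
move=> HM H; apply: Delta_i_le => // j k.
have /andP[a1 a2] := H j; have /andP[b1 b2] := H k.
rewrite ler_norml; apply/andP; split; lra.
Qed.

Lemma exists_cfg (f q h : nat) (G : {set 'I_h}) :
  (q <= #|G|)%N ->
  exists X : config h, inS f q X /\ forall j, X j \subset G /\ #|X j| = (q - 1)%N.
Proof.
move=> HG.
pose Y (j : 'I_h) := [set x in take (q - 1) (enum (G :\ j))].
have HY : forall j, Y j \subset G :\ j.
  move=> j; apply/subsetP => x; rewrite inE => /mem_take; by rewrite mem_enum.
have HYc : forall j, #|Y j| = (q - 1)%N.
  move=> j; rewrite /Y cardsE.
  have Hu : uniq (take (q - 1) (enum (G :\ j))) by rewrite take_uniq // enum_uniq.
  have e : size (enum (G :\ j)) = #|G :\ j| by rewrite cardE.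
  rewrite (card_uniqP Hu) size_take e.
  have := cardsD1 j G.
  case: ifP => // /negbT; rewrite -leqNgt => H.
  move=> E.
  have ar : forall g c : nat, (q <= g)%N -> (c <= q - 1)%N -> (g <= 1 + c)%N -> c = (q - 1)%N by move=> g c; lia.
  exact: (ar _ _ HG H (leq_trans (eq_leq E) (leq_add (leq_b1 _) (leqnn _)))).

exists [ffun j => Y j]; split.
  apply/forallP => j; rewrite /inSj ffunE HYc; apply/andP; split.
    by apply/negP => /(subsetP (HY j)); rewrite !inE eqxx.
  apply/andP; split; lia.
move=> j; rewrite ffunE HYc; split => //.
by apply: subset_trans (HY j) _; apply: subD1set.
Qed.

Unset Implicit Arguments.

Theorem mainTheorem6 (R : realFieldType) (d f n h q : nat)
  (Hf : (1 <= f)%N) (Hh : h = (n - f)%N)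
  (Hq1 : (2 * f + 2 <= q)%N) (Hq2 : (q <= h./2)%N)
  (lambda : 'I_h -> 'rV[R]_d)
  (P : config h -> R) (rho : R)
  (Hrho : 0 < rho)
  (HP0 : forall X, 0 <= P X)
  (HPout : forall X, ~~ inS f q X -> P X = 0)
  (HPsum : \sum_(X : config h) P X = 1)
  (HPrho : forall X, inS f q X -> rho <= P X)
  (z : config h -> 'I_h -> nat -> 'rV[R]_d) :
  \sum_(X : config h | inS f q X) P X * Delta (theta q lambda z X)
    <= (1 - rho / 4%:R) * Delta lambda
  /\ 1 - rho / 4%:R < 1.
Proof.
split; last by lra.
have Hq2' : (2 * q <= h)%N by move: Hq2; rewrite -divn2; lia.
have h0 : (0 < h)%N by lia.
pose i0 : 'I_h := Ordinal h0.
have Hsum1 : \sum_(X : config h | inS f q X) P X = 1.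
  rewrite -HPsum (bigID (@inS f q h) predT) /= [X in _ + X]big1 ?addr0 // => X /HPout.
under eq_bigr => X _ do rewrite /Delta mulr_sumr.
rewrite exchange_big /= /Delta mulr_sumr; apply: ler_sum => i _.
set F := fun k => lambda k ord0 i.
set D := Delta_i lambda i.
have D0 : 0 <= D by apply: Delta_i_ge0.
have [jm _ Hjm] := @arg_minP _ _ 'I_h i0 xpredT F isT.
set a := F jm.
have Hrange : forall k, a <= F k <= a + D.
  move=> k; have := Hjm k isT; have := @Delta_i_diff _ _ _ lambda i k jm; rewrite -/D /a /F; move=> *; apply/andP; split; lra.
have Ha : forall X, inS f q X -> Delta_i (theta q lambda z X) i <= D.
  move=> X /forallP HX; apply: (@Delta_i_range _ _ _ _ _ a) => // j.
  have /andP[_ /andP[c1 c2]] := HX j.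
  apply: theta_in; [exact: c2 | lia | by move=> k _; exact: Hrange | ].
  rewrite Hrange /= add0n.
  have ar : forall c : nat, (q - f - 1 <= c)%N -> (2 * (q - 1 - c) < q)%N by move=> c; lia.
  exact: ar.
have Hb : exists Xs, inS f q Xs /\ Delta_i (theta q lambda z Xs) i <= D / 2%:R.
  pose m := a + D / 2%:R.
  pose L := [set k | F k <= m].
  have Hcard : (#|L| + #|~: L| = h)%N by rewrite cardsC card_ord.
  have ar : forall b : bool, (2 * (b + (q - 1 - (q - 1))) < q)%N by case => /=; lia.
  case: (leqP q #|L|) => HL.
    have [Xs [HXs Hsub]] := @exists_cfg f q _ _ HL.
    exists Xs; split => //.
    apply: (@Delta_i_range _ _ _ _ _ a) => //; first lra.
    move=> j; have [Hs Hc] := Hsub j.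
    apply: theta_in; [by rewrite Hc | lia | | by rewrite Hc; apply: ar].
    move=> k /(subsetP Hs); rewrite inE => Hk; have := Hrange k; rewrite /m in Hk.
    move=> /andP[? ?]; apply/andP; split; rewrite -/(F k); lra.
  have HU : (q <= #|~: L|)%N by lia.
  have [Xs [HXs Hsub]] := @exists_cfg f q _ _ HU.
  exists Xs; split => //.
  apply: (@Delta_i_range _ _ _ _ _ m) => //; first lra.
  move=> j; have [Hs Hc] := Hsub j.
  apply: theta_in; [by rewrite Hc | lia | | by rewrite Hc; apply: ar].
  move=> k /(subsetP Hs); rewrite !inE -ltNge => Hk; have := Hrange k; rewrite /m in Hk *.
  move=> /andP[? ?]; apply/andP; split; rewrite -/(F k); lra.
have [Xs [HXs HXsD]] := Hb.
rewrite (bigD1 Xs) //=.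
have S1 : \sum_(X | inS f q X && (X != Xs)) P X * Delta_i (theta q lambda z X) i
    <= (1 - P Xs) * D.
  apply: le_trans (_ : \sum_(X | inS f q X && (X != Xs)) P X * D <= _).
    apply: ler_sum => X /andP[HX _]; apply: ler_wpM2l => //; exact: Ha.
  rewrite -mulr_suml; apply: ler_wpM2r => //.
  move: Hsum1; rewrite (bigD1 Xs) //= => E; lra.
have S2 : P Xs * Delta_i (theta q lambda z Xs) i <= P Xs * (D / 2%:R)
  by apply: ler_wpM2l.
have S3 := HPrho _ HXs.
have S4 : 0 <= (P Xs - rho) * D by apply: mulr_ge0 => //; lra.
nra.
Qed.
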